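(* Let $r\geq 3$, $s\geq 3$ and $\ell>4$ be fixed integers. Then there is a constant $C(r,s,\ell)$ such that every connected $(K_{1,r},K_s^h,P_\ell)$-free graph $G$ (of order at least $3$) satisfies $rx_3(G)\leq sdiam_3(G)+C(r,s,\ell)$.
   Context: All graphs are finite, simple, undirected. A tree in an edge-colored graph is rainbow if no two of its edges have the same color; an $S$-tree is a tree containing all vertices of $S$. A $3$-rainbow coloring of a connected graph $G$ is an edge-coloring (adjacent edges may share colors) such that every $3$-element vertex set $S$ has a rainbow $S$-tree; $rx_3(G)$ is the minimum number of colors in such a coloring. $sdiam_3(G)$ is the maximum, over all $3$-element $S\subseteq V(G)$, of the minimum number of edges of an $S$-tree. $(K_{1,r},K_s^h,P_\ell)$-free means no induced subgraph isomorphic to any of these. $P_n$ is the path on $n$ vertices, $K_{1,r}$ the star with $r$ leaves, $K_s^h$ the graph obtained from $K_s$ by attaching a pendant edge to each vertex. *)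

(* Defs.v *)
(* Simple graphs are symmetric irreflexive relations e : rel T
   on a finite type T. *)
From mathcomp Require Import all_boot.
Set Implicit Arguments. Unset Strict Implicit. Unset Printing Implicit Defensive.

Section Graphs.
Variable T : finType.
Variable e : rel T.

Definition is_edge (f : {set T}) : bool :=
  [exists x, exists y, (f == [set x; y]) && e x y].

Definition vset (F : {set {set T}}) : {set T} := \bigcup_(f in F) f.

Definition adjF (F : {set {set T}}) : rel T := fun a b => [set a; b] \in F.

(* F is (the edge set of) a tree of G: a subgraph of G that is connected
   and acyclic; acyclicity is expressed as: every edge is a bridge of F. *)
Definition is_tree (F : {set {set T}}) : bool :=
  [&& F != set0,
      [forall f in F, is_edge f],
      [forall x in vset F, forall y in vset F, connect (adjF F) x y] &
      [forall f in F, forall x, forall y,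
         (f == [set x; y]) ==> (x != y) ==> ~~ connect (adjF (F :\ f)) x y]].

Definition is_Stree (S : {set T}) (F : {set {set T}}) : bool :=
  is_tree F && (S \subset vset F).

Definition rainbow (k : nat) (c : {ffun {set T} -> 'I_k}) (F : {set {set T}}) : bool :=
  [forall f in F, forall g in F, (c f == c g) ==> (f == g)].

(* c (using colors from 'I_k, only its values on edges matter) is a
   3-rainbow coloring *)
Definition three_rainbow (k : nat) (c : {ffun {set T} -> 'I_k}) : bool :=
  [forall S : {set T}, (#|S| == 3) ==>
     [exists F : {set {set T}}, is_Stree S F && rainbow c F]].

Definition has_3rainbow_coloring (k : nat) : bool :=
  [exists c : {ffun {set T} -> 'I_k}, three_rainbow c].

(* The bound #|{set T}| (number of subsets of V) is always attained for
   connected G (give every edge its own color), so the default is harmless. *)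
Definition rx3 : nat :=
  \big[minn/#|{set T}|]_(k < #|{set T}|.+1 | has_3rainbow_coloring k) k.

Definition sdist (S : {set T}) : nat :=
  \big[minn/#|T|]_(F : {set {set T}} | is_Stree S F) #|F|.

Definition sdiam3 : nat := \max_(S : {set T} | #|S| == 3) sdist S.

Definition connected : Prop := forall x y : T, connect e x y.

Definition has_induced (H : finType) (h : rel H) : Prop :=
  exists f : H -> T, injective f /\ forall x y, e (f x) (f y) = h x y.

End Graphs.

Definition star_rel (r : nat) : rel 'I_r.+1 :=
  fun i j => (val i == 0) != (val j == 0).

(* K_s^h: vertex (i, true) is the i-th vertex of K_s, (i, false) its pendant *)
Definition hair_rel (s : nat) : rel ('I_s * bool) :=
  fun x y => ((x.2 && y.2) && (x.1 != y.1)) || ((x.2 != y.2) && (x.1 == y.1)).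

Definition path_rel (l : nat) : rel 'I_l :=
  fun i j => ((val i).+1 == val j) || ((val j).+1 == val i).

(* Main.v *)
Require Import Defs.
From mathcomp Require Import all_boot zify.
Set Implicit Arguments. Unset Strict Implicit. Unset Printing Implicit Defensive.


Section Ramsey.
Variable T : finType.
Variable R : rel T.
Hypothesis Rs : symmetric R.

Definition clq (K : {set T}) := forall x y, x \in K -> y \in K -> x != y -> R x y.
Definition ind (K : {set T}) := forall x y, x \in K -> y \in K -> x != y -> ~~ R x y.

Lemma ramsey a b (X : {set T}) : 'C(a + b, a) <= #|X| ->
  (exists2 K : {set T}, K \subset X & (#|K| = a /\ clq K)) \/
  (exists2 K : {set T}, K \subset X & (#|K| = b /\ ind K)).
Proof.
elim: a b X => [|a IHa] b X.
  by move=> _; left; exists set0; rewrite ?sub0set ?cards0 //; split=> // x y; rewrite inE.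
elim: b X => [|b IHb] X.
  by move=> _; right; exists set0; rewrite ?sub0set ?cards0 //; split=> // x y; rewrite inE.
rewrite addSn addnS binS => hX.
have : 0 < #|X| by apply: leq_trans hX; rewrite addn_gt0 bin_gt0 leq_addr.
case/card_gt0P => x xX.
pose N := (X :\ x) :&: [set y | R x y].
pose M := (X :\ x) :\: [set y | R x y].
have hNM : #|N| + #|M| = #|X| - 1.
  by rewrite /N /M cardsID [in RHS](cardsD1 x X) xX add1n subn1.
have xN : x \notin N by rewrite !inE eqxx.
have xM : x \notin M by rewrite !inE eqxx andbF.
have NX : N \subset X by apply/subsetP => y; rewrite !inE => /andP[/andP[]].
have MX : M \subset X by apply/subsetP => y; rewrite !inE => /andP[_ /andP[]].
case: (leqP 'C(a + b.+1, a) #|N|) => hN.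
  case: (IHa b.+1 N hN) => [[K KN [cK clK]]|[K KN [cK inK]]].
    left; exists (x |: K).
      by rewrite subUset sub1set xX (subset_trans KN NX).
    have xK : x \notin K by apply: contra xN; apply: (subsetP KN).
    split; first by rewrite cardsU1 xK cK.
    move=> y z; rewrite !inE => /predU1P[->|yK] /predU1P[->|zK]; rewrite ?eqxx //.
    - by move=> _; have := subsetP KN z zK; rewrite !inE => /andP[_ ->].
    - by move=> _; have := subsetP KN y yK; rewrite !inE Rs => /andP[_ ->].
    - by apply: clK.
  by right; exists K => //; apply: subset_trans KN NX.
have hM : 'C(a.+1 + b, a.+1) <= #|M|.
  have h1 := leq_sub2r 1 hX; rewrite -hNM in h1.
  rewrite addnS in hN; rewrite addSn; lia.
case: (IHb M hM) => [[K KM [cK clK]]|[K KM [cK inK]]].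
  by left; exists K => //; apply: subset_trans KM MX.
right; exists (x |: K).
  by rewrite subUset sub1set xX (subset_trans KM MX).
have xK : x \notin K by apply: contra xM; apply: (subsetP KM).
split; first by rewrite cardsU1 xK cK.
move=> y z; rewrite !inE => /predU1P[->|yK] /predU1P[->|zK]; rewrite ?eqxx //.
- by move=> _; have := subsetP KM z zK; rewrite !inE => /andP[/negbTE -> _].
- by move=> _; have := subsetP KM y yK; rewrite !inE Rs => /andP[/negbTE -> _].
- by apply: inK.
Qed.
End Ramsey.


Section Trees.
Variable T : finType.
Variable e : rel T.

Lemma first_step (r : rel T) x y : connect r x y -> x != y -> exists z, r x z.
Proof.
case/connectP => p; case: p => [|z p] /= => [_ ->|/andP[h _] _ _]; first by rewrite eqxx.
by exists z.
Qed.

Lemma adjF_sym (F : {set {set T}}) : symmetric (adjF F).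
Proof. by move=> a b; rewrite /adjF setUC. Qed.

Lemma in_vset (F : {set {set T}}) x : reflect (exists2 f, f \in F & x \in f) (x \in vset F).
Proof. by apply: (iffP bigcupP) => [[f]|[f]]; exists f. Qed.

Lemma vset_sub (F G : {set {set T}}) : F \subset G -> vset F \subset vset G.
Proof.
move=> FG; apply/subsetP => x /in_vset [f fF xf]; apply/in_vset.
by exists f => //; apply: (subsetP FG).
Qed.

Lemma adjF_vset (F : {set {set T}}) x z : adjF F x z -> x \in vset F.
Proof. by move=> h; apply/in_vset; exists [set x; z]; rewrite // !inE eqxx. Qed.

Definition goodF (F F' : {set {set T}}) :=
  [&& F' \subset F, F' != set0, [forall f in F', is_edge e f], vset F' == vset F &
      [forall x in vset F', forall y in vset F', connect (adjF F') x y]].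

Lemma tree_sub (F : {set {set T}}) : F != set0 -> [forall f in F, is_edge e f] ->
  (forall x y, x \in vset F -> y \in vset F -> connect (adjF F) x y) ->
  exists2 F' : {set {set T}}, F' \subset F & is_tree e F' && (vset F' == vset F).
Proof.
move=> F0 Fe Fc.
have gF : goodF F F.
  rewrite /goodF subxx F0 Fe eqxx /=; apply/forallP => x; apply/implyP => xF.
  by apply/forallP => y; apply/implyP => yF; apply: Fc.
case: (@arg_minnP _ F (goodF F) (fun F' : {set {set T}} => #|F'|) gF) => F' gF' minF.
case/and5P: gF' => F'F F'0 F'e /eqP vF' F'c.
exists F' => //; rewrite /is_tree F'0 F'e F'c vF' eqxx /= andbT.
apply/forallP => f; apply/implyP => fF'; apply/forallP => x; apply/forallP => y.
apply/implyP => /eqP fxy; apply/implyP => xy; apply/negP => cxy.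
pose H := F' :\ f.
have cyx : connect (adjF H) y x by rewrite (sym_connect_sym (@adjF_sym H)).
have yx : y != x by rewrite eq_sym.
have xH : x \in vset H by case: (first_step cxy xy) => z /adjF_vset.
have yH : y \in vset H by case: (first_step cyx yx) => z /adjF_vset.
have vH : vset H = vset F'.
  apply/eqP; rewrite eqEsubset vset_sub ?subsetDl //=.
  apply/subsetP => z /in_vset [g ggF zg].
  case: (eqVneq g f) => [gf|gf].
    by move: zg; rewrite gf fxy !inE => /predU1P[->|/eqP->].
  by apply/in_vset; exists g => //; rewrite !inE gf ggF.
have gH : goodF F H.
  apply/and5P; split.
  - by apply: subset_trans F'F; apply: subsetDl.
  - case: (first_step cxy xy) => z hz; apply/set0Pn; by exists [set x; z].
  - apply/forallP => g; apply/implyP => /setD1P [_ hgF].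
    by move/forallP: F'e => /(_ g) /implyP; apply.
  - by rewrite vH vF'.
  apply/forallP => a; apply/implyP => aH; apply/forallP => b; apply/implyP => bH.
  rewrite vH in aH bH.
  move/forallP: F'c => /(_ a) /implyP /(_ aH) /forallP /(_ b) /implyP /(_ bH).
  apply: connect_sub => u w hu.
  case: (eqVneq [set u; w] f) => [uwf|uwf].
    have uxy : u \in [set x; y] by rewrite -fxy -uwf !inE eqxx.
    have wxy : w \in [set x; y] by rewrite -fxy -uwf !inE eqxx orbT.
    move: uxy wxy; rewrite !inE => /predU1P[->|/eqP->] /predU1P[->|/eqP->] //.
  by apply: connect1; rewrite /adjF !inE uwf.
have := minF H gH; rewrite (cardsD1 f F') fF' add1n ltnn //.
Qed.
End Trees.


Section Graph.
Variable T : finType.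
Variable e : rel T.
Hypothesis es : symmetric e.
Hypothesis ei : irreflexive e.

Definition indepG (I : {set T}) := forall x y, x \in I -> y \in I -> ~~ e x y.
Definition alpha_le (X : {set T}) (A : nat) := forall I : {set T}, I \subset X -> indepG I -> #|I| <= A.

Lemma claw_free r : ~ has_induced e (@star_rel r) ->
  forall c (K : {set T}), #|K| = r -> indepG K -> (forall x, x \in K -> e c x) -> False.
Proof.
move=> nc c K cK iK cadj; apply: nc.
pose f (i : 'I_r.+1) := if val i is k.+1 then nth c (enum K) k else c.
have sz : size (enum K) = r by rewrite -cardE.
have cK' : c \notin K by apply/negP => /cadj; rewrite ei.
have fK k : k < r -> nth c (enum K) k \in K by move=> hk; rewrite -mem_enum mem_nth ?sz.
exists f; split.
  move=> [[|i] hi] [[|j] hj]; rewrite /f /= => h; apply: val_inj => //=.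
  - by move: cK'; rewrite h fK.
  - by move: cK'; rewrite -h fK.
  - by congr _.+1; apply/eqP; rewrite -(nth_uniq c _ _ (enum_uniq K)) ?sz // h.
move=> [[|i] hi] [[|j] hj]; rewrite /f /star_rel /=.
- by rewrite ei.
- by rewrite cadj ?fK.
- by rewrite es cadj ?fK.
- by apply/negbTE/iK; apply: fK.
Qed.

Lemma hair_free s : 0 < s -> ~ has_induced e (@hair_rel s) ->
  forall (X : {set T}) (u : T -> T), #|X| = s -> indepG X -> {in X &, injective u} ->
  (forall x y, x \in X -> y \in X -> x != y -> e (u x) (u y)) ->
  (forall x y, x \in X -> y \in X -> e x (u y) = (x == y)) ->
  (forall x y, x \in X -> y \in X -> u x != y) -> False.
Proof.
move=> s0 nh X u cX iX uinj ucl uadj uneq; apply: nh.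
have : 0 < #|X| by rewrite cX.
case/card_gt0P => x0 x0X.
have sz : size (enum X) = s by rewrite -cardE.
pose g (k : 'I_s) := nth x0 (enum X) k.
have gX k : g k \in X by rewrite -mem_enum mem_nth ?sz.
have geq k k' : (g k == g k') = (k == k').
  by rewrite /g nth_uniq ?sz ?enum_uniq.
pose f (p : 'I_s * bool) := if p.2 then u (g p.1) else g p.1.
exists f; split.
  move=> [k [|]] [k' [|]]; rewrite /f /=.
  - by move=> /uinj h; have := h (gX k) (gX k') => /eqP; rewrite geq => /eqP->.
  - by move=> h; have := uneq _ _ (gX k) (gX k'); rewrite h eqxx.
  - by move=> h; have := uneq _ _ (gX k') (gX k); rewrite h eqxx.
  - by move=> /eqP; rewrite geq => /eqP->.
move=> [k [|]] [k' [|]]; rewrite /f /hair_rel /=.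
- case: (eqVneq k k') => [->|kk]; first by rewrite ei.
  by rewrite ucl ?gX // geq.
- by rewrite es (uadj _ _ (gX k') (gX k)) geq eq_sym.
- by rewrite (uadj _ _ (gX k) (gX k')) geq.
- by apply/negbTE; apply: iX; apply: gX.
Qed.

Lemma alpha_step r s : 0 < r -> 0 < s ->
  ~ has_induced e (@star_rel r) -> ~ has_induced e (@hair_rel s) ->
  forall (X Y : {set T}) A, alpha_le X A -> [disjoint X & Y] ->
  (forall y, y \in Y -> exists2 x, x \in X & e x y) ->
  alpha_le Y ('C(r + 'C(r + 'C(s + A.+1, s), r), r)).
Proof.
move=> r0 s0 nc nh X Y A aX dXY dom J JY iJ.
rewrite leqNgt; apply/negP => big.
pose u y := odflt y [pick x in X | e x y].
have uP y : y \in Y -> (u y \in X) && e (u y) y.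
  move=> yY; rewrite /u; case: pickP => [x /andP[-> ->] //|none] /=.
  by case: (dom y yY) => x xX exy; have := none x; rewrite xX exy.
have uJ y : y \in J -> (u y \in X) && e (u y) y by move=> yJ; apply: uP; apply: (subsetP JY).
pose o1 (x : T) := val (enum_rank x).
pose o2 (x : T) := #|T| - o1 x.
have o1lt x : o1 x < #|T| by rewrite /o1; case: (enum_rank x).
pose red (o : T -> nat) := [rel x y | ((o x < o y) && e x (u y)) || ((o y < o x) && e y (u x))].
have reds o : symmetric (red o) by move=> x y; rewrite /= orbC.
have nored (o : T -> nat) (K : {set T}) : (forall x y, x != y -> o x != o y) ->
    K \subset J -> #|K| = r -> clq (red o) K -> False.
  move=> oinj KJ cK clK.
  have : 0 < #|K| by rewrite cK.
  case/card_gt0P => z0 z0K.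
  case: (@arg_maxnP _ z0 (fun x => x \in K) o z0K) => z zK zmax.
  apply: (claw_free nc (c := u z) cK).
    by move=> x y xK yK; apply: iJ; apply: (subsetP KJ).
  move=> x xK; case: (eqVneq x z) => [->|xz].
    by case/andP: (uJ z (subsetP KJ z zK)).
  have := clK x z xK zK xz; rewrite /=.
  have hlt : o x < o z by rewrite ltn_neqAle (oinj x z xz); apply: zmax.
  by rewrite hlt ltnNge (ltnW hlt) /= orbF es.
have o1inj x y : x != y -> o1 x != o1 y.
  by apply: contra => /eqP /val_inj /enum_rank_inj ->.
have o2inj x y : x != y -> o2 x != o2 y.
  move=> /o1inj; have := o1lt x; have := o1lt y; rewrite /o2; lia.
set N2 := 'C(s + A.+1, s); set N1 := 'C(r + N2, r).
have [[K KJ [cK clK]]|[J1 J1J [cJ1 iJ1]]] := ramsey (reds o1) (ltnW big).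
  by apply: (nored o1 K o1inj KJ cK clK).
have b1 : 'C(r + N2, r) <= #|J1| by rewrite cJ1.
have [[K KJ [cK clK]]|[J2 J2J [cJ2 iJ2]]] := ramsey (reds o2) b1.
  by apply: (nored o2 K o2inj (subset_trans KJ J1J) cK clK).
have J2J' : J2 \subset J := subset_trans J2J J1J.
have sep x y : x \in J2 -> y \in J2 -> x != y -> ~~ e x (u y).
  move=> xJ yJ xy.
  have := o1inj _ _ xy; rewrite neq_ltn => /orP[lt|lt].
    have := iJ1 x y (subsetP J2J x xJ) (subsetP J2J y yJ) xy.
    by rewrite /= lt /= => /norP[].
  have lt2 : o2 x < o2 y by have := o1lt x; have := o1lt y; rewrite /o2; lia.
  have := iJ2 x y xJ yJ xy.
  by rewrite /= lt2 /= => /norP[].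
have uinj : {in J2 &, injective u}.
  move=> x y xJ yJ uxy; apply/eqP; apply/negPn/negP => xy.
  have := sep x y xJ yJ xy; rewrite -uxy es.
  by case/andP: (uJ x (subsetP J2J' x xJ)) => _ ->.
pose U := u @: J2.
have cU : #|U| = N2 by rewrite card_in_imset.
have UX : U \subset X.
  apply/subsetP => w /imsetP [x xJ ->].
  by case/andP: (uJ x (subsetP J2J' x xJ)).
have bU : 'C(s + A.+1, s) <= #|U| by rewrite cU.
have [[W WU [cW clW]]|[W WU [cW iW]]] := ramsey es bU; last first.
  suff hW : indepG W by have := aX W (subset_trans WU UX) hW; rewrite cW ltnn.
  move=> x y xW yW; case: (eqVneq x y) => [->|xy]; first by rewrite ei.
  by apply: iW.
pose XH := [set x in J2 | u x \in W].
have XHJ : XH \subset J2 by apply/subsetP => x; rewrite inE => /andP[].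
have uXH : u @: XH = W.
  apply/eqP; rewrite eqEsubset; apply/andP; split.
    by apply/subsetP => w /imsetP [x]; rewrite inE => /andP[_ h] ->.
  apply/subsetP => w wW; have := subsetP WU w wW => /imsetP [x xJ wx].
  by apply/imsetP; exists x => //; rewrite inE xJ -wx wW.
have uinjH : {in XH &, injective u}.
  by move=> x y xH yH; apply: uinj; apply: (subsetP XHJ).
have cXH : #|XH| = s by rewrite -cW -uXH card_in_imset.
apply: (hair_free s0 nh cXH _ uinjH).
- by move=> x y xH yH; apply: iJ; apply: (subsetP J2J'); apply: (subsetP XHJ).
- move=> x y xH yH xy; apply: clW.
  + by rewrite -uXH; apply: imset_f.
  + by rewrite -uXH; apply: imset_f.
  + by apply: contra xy => /eqP /uinjH -> //.
- move=> x y xH yH; case: (eqVneq x y) => [->|xy].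
    by rewrite es; case/andP: (uJ y (subsetP J2J' y (subsetP XHJ y yH))).
  by apply/negbTE; apply: sep => //; apply: (subsetP XHJ).
- move=> x y xH yH; apply/eqP => uxy.
  have ux : u x \in X.
    by case/andP: (uJ x (subsetP J2J' x (subsetP XHJ x xH))).
  have yY : y \in Y by apply: (subsetP JY); apply: (subsetP J2J'); apply: (subsetP XHJ).
  by move: (disjointFr dXY ux); rewrite uxy yY.
Qed.
End Graph.


Fixpoint abd (r s i : nat) : nat :=
  if i is j.+1 then abd r s j + 'C(r + 'C(r + 'C(s + (abd r s j).+1, s), r), r) else 1.

Section Layers.
Variable T : finType.
Variable e : rel T.
Hypothesis es : symmetric e.
Hypothesis ei : irreflexive e.
Variable v : T.

Fixpoint B (n : nat) : {set T} :=
  if n is m.+1 then B m :|: [set y | [exists x in B m, e x y]] else [set v].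

Definition lay n x := (x \in B n) && (if n is m.+1 then x \notin B m else true).

Lemma B_mono m n : m <= n -> B m \subset B n.
Proof.
elim: n => [|n IH]; first by rewrite leqn0 => /eqP->.
rewrite leq_eqVlt => /orP[/eqP->//|hm].
by apply: subset_trans (IH hm) _; apply: subsetUl.
Qed.

Lemma B_step a b i : e a b -> a \in B i -> b \in B i.+1.
Proof.
move=> eab aB; rewrite /= in_setU; apply/orP; right; rewrite inE.
by apply/existsP; exists a; rewrite aB eab.
Qed.

Lemma B_back x i : x \in B i.+1 -> x \notin B i -> exists2 y, lay i y & e y x.
Proof.
rewrite /= in_setU => /orP[->//|]; rewrite inE => /existsP[y /andP[yB exy]] xB.
exists y => //; rewrite /lay yB /=; case: i yB xB => [//|j] yB xB.
by apply/negP => yj; move: xB; rewrite (B_step exy yj).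
Qed.

Lemma lay_B i x : lay i x -> x \in B i.
Proof. by case/andP. Qed.

Lemma lay_notB i j x : lay i x -> j < i -> x \notin B j.
Proof.
case: i => [//|i] /andP[_ xi] ji; apply: contra xi; apply: (subsetP (B_mono _)).
by rewrite -ltnS.
Qed.

Lemma lay_inj i j x : lay i x -> lay j x -> i = j.
Proof.
move=> li lj; case: (ltngtP i j) => // h.
  by move: (lay_notB lj h); rewrite lay_B.
by move: (lay_notB li h); rewrite lay_B.
Qed.

Lemma lay_far i j a b : lay i a -> lay j b -> i.+1 < j -> ~~ e a b.
Proof.
move=> la lb h; apply/negP => eab.
by move: (lay_notB lb h); rewrite (B_step eab (lay_B la)).
Qed.

Lemma chain m x : lay m x -> exists g : nat -> T,
  [/\ g m = x, forall i, i <= m -> lay i (g i) & forall i, i < m -> e (g i) (g i.+1)].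
Proof.
elim: m x => [|m IH] x lx.
  by exists (fun _ => x); split=> // i; rewrite leqn0 => /eqP->.
case/andP: (lx) => xB xn; case: (B_back xB xn) => y ly eyx.
case: (IH y ly) => g [gm gl ge].
exists (fun i => if i == m.+1 then x else g i); split.
- by rewrite eqxx.
- move=> i; rewrite leq_eqVlt => /orP[/eqP->|hi]; first by rewrite eqxx.
  by rewrite (ltn_eqF hi); apply: gl.
- move=> i hi; rewrite (ltn_eqF hi); case: (eqVneq i m) => [->|im].
    by rewrite eqxx gm.
  have hi' : i < m by rewrite ltn_neqAle im -ltnS.
  by rewrite ltn_eqF ?ltnS //; apply: ge.
Qed.

Lemma reach p a n : a \in B n -> path e a p -> last a p \in B (n + size p).
Proof.
elim: p a n => [|b p IH] a n /=; first by rewrite addn0.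
move=> aB /andP[eab pp]; rewrite addnS -addSn; apply: IH => //.
exact: B_step eab aB.
Qed.

Lemma all_B : connected e -> forall x, exists n, x \in B n.
Proof.
move=> con x; case/connectP: (con v x) => p pp ->; exists (0 + size p).
by apply: reach => //; rewrite /= inE.
Qed.

Lemma lay_of n x : x \in B n -> exists2 m, m <= n & lay m x.
Proof.
elim: n => [|n IH] xB; first by exists 0; rewrite /lay ?xB.
case: (boolP (x \in B n)) => [xn|xn].
  by case: (IH xn) => m hm lm; exists m => //; apply: leqW.
by exists n.+1; rewrite /lay ?xB ?xn.
Qed.

Lemma lay_small l : ~ has_induced e (@path_rel l) -> forall m x, lay m x -> m.+2 <= l.
Proof.
move=> np m x lx; rewrite leqNgt; apply/negP => hl.
case: (chain lx) => g [gm gl ge].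
have hi (i : 'I_l) : i <= m by have := ltn_ord i; lia.
have key i j : i < j -> j <= m -> e (g i) (g j) = (i.+1 == j).
  move=> ij jm; case: (eqVneq i.+1 j) => [<-|ij'].
    by rewrite ge //; lia.
  apply: negbTE; apply: (lay_far (gl i _) (gl j _)) => //; first by lia.
  by rewrite ltn_neqAle ij' ij.
apply: np; exists (fun i : 'I_l => g i); split.
  move=> i j /= gij; apply: val_inj; apply: (lay_inj (gl i (hi i))).
  by rewrite gij; exact: (gl j (hi j)).
move=> i j; rewrite /path_rel; case: (ltngtP i j) => h.
- rewrite key ?hi //; have -> : (j.+1 == i) = false by apply/eqP; lia.
  by rewrite orbF.
- rewrite es key ?hi //; have -> : (i.+1 == j) = false by apply/eqP; lia.
  done.
- by rewrite (val_inj h) ei; apply/esym/negbTE; rewrite negb_or !eqn_leq; lia.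
Qed.

Lemma indep_sub (I J : {set T}) : I \subset J -> indepG e J -> indepG e I.
Proof. by move=> IJ iJ x y xI yI; apply: iJ; apply: (subsetP IJ). Qed.

Lemma alpha_B r s : 0 < r -> 0 < s ->
  ~ has_induced e (@star_rel r) -> ~ has_induced e (@hair_rel s) ->
  forall i, alpha_le e (B i) (abd r s i).
Proof.
move=> r0 s0 nc nh; elim => [|i IH] I IB iI /=.
  by apply: leq_trans (subset_leq_card IB) _; rewrite cards1.
rewrite -(cardsID (B i) I); apply: leq_add.
  apply: IH; first by apply: subsetIr.
  by apply: indep_sub iI; apply: subsetIl.
apply: (alpha_step es ei r0 s0 nc nh (Y := B i.+1 :\: B i) IH).
- rewrite -setI_eq0; apply/eqP/setP => x; rewrite !inE.
  by case: (x \in B i); rewrite ?andbF.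
- move=> y; rewrite in_setD => /andP[yn yB]; case: (B_back yB yn) => z lz ezy.
  by exists z => //; apply: lay_B.
- by apply: setSD.
- by apply: indep_sub iI; apply: subsetDl.
Qed.
End Layers.


Section Color.
Variable T : finType.
Variable e : rel T.
Hypothesis es : symmetric e.
Hypothesis ei : irreflexive e.
Variable v : T.

Definition restr (Dp : {set T}) := [rel a b | [&& a \in Dp, b \in Dp & e a b]].

Lemma restr_sym Dp : symmetric (restr Dp).
Proof. by move=> a b; rewrite /= es andbCA. Qed.

Lemma coloring (Dp : {set T}) (D : nat -> {set T}) M :
  2 < #|T| -> #|Dp| <= M -> v \in Dp ->
  (forall y, y \in Dp -> connect (restr Dp) y v) ->
  (forall i j x, i < 3 -> j < 3 -> x \in D i -> x \in D j -> i = j) ->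
  (forall i, i < 3 -> D i \subset Dp) ->
  (forall w, w \notin Dp -> forall i, i < 3 -> exists2 d, d \in D i & e w d) ->
  has_3rainbow_coloring e (2 ^ M + 2).+1.
Proof.
move=> T3 DpM vDp Dpc Ddis DDp dom.
set P := 2 ^ M.
pose idx (f : {set T}) := index f (enum (powerset Dp)).
pose dsel (f : {set T}) : nat := if [exists d in D 0, d \in f] then 0
  else if [exists d in D 1, d \in f] then 1 else 2.
pose col (f : {set T}) : 'I_(P + 2).+1 := inord (if f \subset Dp then idx f else P + dsel f).
pose c := [ffun f => col f].
apply/existsP; exists c; apply/forallP => S; apply/implyP => /eqP cS.
pose jS w := index w (enum S).
pose nb w := odflt w [pick d in D (jS w) | e w d].
have jSlt w : w \in S -> jS w < 3 by move=> wS; rewrite /jS -cS cardE index_mem mem_enum.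
have jSinj w w' : w \in S -> w' \in S -> jS w = jS w' -> w = w'.
  move=> wS w'S h.
  have h1 : nth w (enum S) (jS w) = w by rewrite /jS nth_index // mem_enum.
  have h2 : nth w (enum S) (jS w') = w' by rewrite /jS nth_index // mem_enum.
  by rewrite -h1 h h2.
have nbP w : w \in S -> w \notin Dp -> (nb w \in D (jS w)) && e w (nb w).
  move=> wS wD; rewrite /nb; case: pickP => [d /andP[-> ->] //|none] /=.
  by case: (dom w wD (jS w) (jSlt w wS)) => d dD ed; have := none d; rewrite dD ed.
have dselP w d j : w \notin Dp -> j < 3 -> d \in D j -> dsel [set w; d] = j.
  move=> wD j3 dD.
  have ex i : i < 3 -> [exists d' in D i, d' \in [set w; d]] = (i == j).
    move=> i3; apply/existsP/eqP => [[d' /andP[d'D]]|->]; last first.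
      by exists d; rewrite dD !inE eqxx orbT.
    rewrite !inE => /predU1P[eq|/eqP eq].
      by move: wD; rewrite -eq (subsetP (DDp i i3) d' d'D).
    by apply: (Ddis i j d') => //; rewrite eq.
  rewrite /dsel !ex //; clear ex dD; case: j j3 => [|[|[|]]] //.
pose F0 := [set f | is_edge e f && (f \subset Dp)] :|: [set [set w; nb w] | w in S :\: Dp].
have F0e : [forall f in F0, is_edge e f].
  apply/forallP => f; apply/implyP; rewrite in_setU inE => /orP[/andP[]//|/imsetP[w]].
  rewrite inE => /andP[wD wS] ->.
  case/andP: (nbP w wS wD) => _ ew.
  by apply/existsP; exists w; apply/existsP; exists (nb w); rewrite eqxx ew.
have sz : size (enum (powerset Dp)) <= P.
  by rewrite -cardE card_powerset leq_pexp2l.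
have colv f : (col f : nat) = if f \subset Dp then idx f else P + dsel f.
  rewrite /col inordK // ltnS; case: ifP => fD.
    rewrite /idx; apply: leq_trans _ (leq_addr 2 P); apply: ltnW.
    by apply: leq_trans _ sz; rewrite index_mem mem_enum powersetE.
  by rewrite leq_add2l /dsel; case: ifP => //; case: ifP.
have attach f : f \in F0 -> ~~ (f \subset Dp) ->
    exists2 w, (w \in S) && (w \notin Dp) & f = [set w; nb w].
  rewrite in_setU inE => /orP[/andP[_ ->]//|/imsetP[w]].
  by rewrite inE => /andP[wD wS] -> _; exists w; rewrite ?wD ?wS.
have rbF0 : rainbow c F0.
  apply/forallP => f; apply/implyP => fF; apply/forallP => g; apply/implyP => gF.
  apply/implyP; rewrite !ffunE => /eqP /(congr1 (@nat_of_ord _)); rewrite !colv.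
  case: (boolP (f \subset Dp)) => fD; case: (boolP (g \subset Dp)) => gD.
  - move=> h; apply/eqP.
    have h1 : nth f (enum (powerset Dp)) (idx f) = f by rewrite /idx nth_index // mem_enum powersetE.
    have h2 : nth f (enum (powerset Dp)) (idx g) = g by rewrite /idx nth_index // mem_enum powersetE.
    by rewrite -h1 h h2.
  - move=> h; have : idx f < P.
      by apply: leq_trans _ sz; rewrite index_mem mem_enum powersetE.
    by rewrite h ltnNge leq_addr.
  - move=> h; have : idx g < P.
      by apply: leq_trans _ sz; rewrite index_mem mem_enum powersetE.
    by rewrite -h ltnNge leq_addr.
  - case: (attach f fF fD) => w /andP[wS wD] ->.
    case: (attach g gF gD) => w' /andP[w'S w'D] ->.
    case/andP: (nbP w wS wD) => nbD _; case/andP: (nbP w' w'S w'D) => nb'D _.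
    rewrite (dselP _ _ _ wD (jSlt w wS) nbD) (dselP _ _ _ w'D (jSlt w' w'S) nb'D).
    by move/addnI => /(jSinj _ _ wS w'S) ->.
have lift : subrel (restr Dp) (connect (adjF F0)).
  move=> a b /and3P[aD bD eab]; apply: connect1; rewrite /adjF in_setU inE.
  apply/orP; left; apply/andP; split.
    by apply/existsP; exists a; apply/existsP; exists b; rewrite eqxx eab.
  by rewrite subUset !sub1set aD bD.
have Dpc' y : y \in Dp -> connect (adjF F0) y v.
  by move=> yD; apply: connect_sub lift _ _ (Dpc y yD).
have nbDp w : w \in S -> w \notin Dp -> nb w \in Dp.
  move=> wS wD; case/andP: (nbP w wS wD) => h _.
  exact: subsetP (DDp _ (jSlt w wS)) _ h.
have toV y : y \in vset F0 -> connect (adjF F0) y v.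
  case/in_vset => f fF yf; case: (boolP (f \subset Dp)) => fD.
    by apply: Dpc'; apply: (subsetP fD).
  case: (attach f fF fD) => w /andP[wS wD] ef; move: yf; rewrite ef !inE.
  case/predU1P => [->|/eqP->]; last by apply: Dpc'; apply: nbDp.
  apply: connect_trans (Dpc' _ (nbDp w wS wD)); apply: connect1.
  by rewrite /adjF -ef.
have csym := sym_connect_sym (@adjF_sym _ F0).
have F0c x y : x \in vset F0 -> y \in vset F0 -> connect (adjF F0) x y.
  by move=> xF yF; apply: connect_trans (toV x xF) _; rewrite csym; apply: toV.
have [y yD yv] : exists2 y, y \in Dp & y != v.
  case: (boolP (Dp \subset [set v])) => sub; last first.
    case/subsetPn: sub => y yD; rewrite inE => yv; by exists y.
  have : 1 < #|T| by lia.
  case/card_gt1P => a [b [_ _ ab]].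
  have [w wv] : exists w, w != v.
    by case: (eqVneq a v) => [av|av]; [exists b; rewrite -av eq_sym | exists a].
  have wD : w \notin Dp by apply: contra wv => /(subsetP sub); rewrite inE.
  case: (dom w wD 0 erefl) => d0 d0D _; case: (dom w wD 1 erefl) => d1 d1D _.
  have := subsetP sub d0 (subsetP (DDp 0 erefl) d0 d0D); rewrite inE => /eqP e0.
  have := subsetP sub d1 (subsetP (DDp 1 erefl) d1 d1D); rewrite inE => /eqP e1.
  by have := Ddis 0 1 v erefl erefl; rewrite -{1}e0 -e1 => /(_ d0D d1D).
have SF : S \subset vset F0.
  apply/subsetP => w wS; case: (boolP (w \in Dp)) => wD; last first.
    by apply/in_vset; exists [set w; nb w]; rewrite ?inE ?eqxx //; apply/orP; right;
       apply: imset_f; rewrite inE wD wS.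
  have sr := sym_connect_sym (restr_sym Dp).
  have [z hz] : exists z, restr Dp w z.
    case: (eqVneq w v) => [wv|wv]; last by apply: first_step (Dpc w wD) wv.
    rewrite wv; apply: (first_step (r := restr Dp) (x := v) (y := y)); last by rewrite eq_sym.
    by rewrite sr; apply: Dpc.
  case/and3P: hz => wD' zD ewz; apply: (adjF_vset (z := z)).
  rewrite /adjF in_setU inE; apply/orP; left; apply/andP; split.
    by apply/existsP; exists w; apply/existsP; exists z; rewrite eqxx ewz.
  by rewrite subUset !sub1set wD' zD.
have F00 : F0 != set0.
  apply: contraTneq (SF) => ->; rewrite /vset big_set0 subset0 -cards_eq0 cS.
  done.
case: (tree_sub F00 F0e F0c) => F' F'F /andP[tF /eqP vF].
apply/existsP; exists F'; rewrite /is_Stree tF vF SF /=.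
apply/forallP => f; apply/implyP => fF; apply/forallP => g; apply/implyP => gF.
by move/forallP: rbF0 => /(_ f) /implyP /(_ (subsetP F'F f fF)) /forallP
   /(_ g) /implyP /(_ (subsetP F'F g gF)).
Qed.
End Color.


Lemma bigmin_le (I : eqType) (s : seq I) (P : pred I) (F : I -> nat) d j :
  j \in s -> P j -> \big[minn/d]_(i <- s | P i) F i <= F j.
Proof.
elim: s => [//|a s IH]; rewrite inE big_cons => /predU1P[->|js] Pj.
  by rewrite Pj geq_minl.
case: ifP => _; last exact: IH.
by rewrite geq_min IH ?orbT.
Qed.

Lemma rx3_le (T : finType) (e : rel T) k : has_3rainbow_coloring e k -> rx3 e <= k.
Proof.
move=> hk; rewrite /rx3; case: (leqP k #|{set T}|) => h.
  have hk' : k < #|{set T}|.+1 by [].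
  exact: (@bigmin_le _ _ _ (fun i : 'I_#|{set T}|.+1 => nat_of_ord i) _ (Ordinal hk') (mem_index_enum _) hk).
apply: leq_trans (ltnW h); apply: (big_ind (fun x => x <= #|{set T}|)) => //.
  by move=> x y hx hy; rewrite geq_min hx.
by move=> i _; rewrite -ltnS.
Qed.

Lemma card_bigcup_le (T I : finType) (J : {set I}) (F : I -> {set T}) k :
  (forall x, x \in J -> #|F x| <= k) -> #|\bigcup_(x in J) F x| <= #|J| * k.
Proof.
move=> hF; rewrite -sum_nat_const.
apply: (big_rec2 (fun (U : {set T}) n => #|U| <= n)); first by rewrite cards0.
move=> i U n iJ hU; apply: leq_trans (leq_card_setU _ _).1 _.
by apply: leq_add => //; apply: hF.
Qed.

Lemma maxind (T : finType) (e : rel T) (es : symmetric e) (ei : irreflexive e) (Z : {set T}) : exists D : {set T},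
  [/\ D \subset Z, indepG e D & forall w, w \in Z -> w \notin D -> exists2 d, d \in D & e w d].
Proof.
pose ok (D : {set T}) := (D \subset Z) && [forall x in D, forall y in D, ~~ e x y].
have ok0 : ok set0 by rewrite /ok sub0set; apply/forallP => x; rewrite inE.
case: (@arg_maxnP _ set0 ok (fun D : {set T} => #|D|) ok0) => D /andP[DZ iD] Dmax.
have iD' : indepG e D.
  move=> x y xD yD.
  by move/forallP: iD => /(_ x) /implyP /(_ xD) /forallP /(_ y) /implyP /(_ yD).
exists D; split => // w wZ wD.
case: (boolP [exists d in D, e w d]) => [/exists_inP //|/exists_inPn nn]; exfalso.
have : ok (w |: D).
  rewrite /ok subUset sub1set wZ DZ /=; apply/forallP => x; apply/implyP.
  rewrite in_setU1 => hx; apply/forallP => y; apply/implyP; rewrite in_setU1 => hy.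
  case/predU1P: hx => [->|xD]; case/predU1P: hy => [->|yD].
  - by rewrite ei.
  - by apply: nn.
  - by rewrite es; apply: nn.
  - by apply: iD'.
move/Dmax; rewrite cardsU1 wD add1n. lia.
Qed.

Theorem theorem9 (r s l : nat) (hr : 3 <= r) (hs : 3 <= s) (hl : 4 < l) :
  exists C : nat,
    forall (T : finType) (e : rel T),
      symmetric e -> irreflexive e -> 3 <= #|T| -> connected e ->
      ~ has_induced e (@star_rel r) ->
      ~ has_induced e (@hair_rel s) ->
      ~ has_induced e (@path_rel l) ->
      rx3 e <= sdiam3 e + C.
Proof.
set A := abd r s (l - 2).
set M := (3 * A * l).+1.
exists (2 ^ M + 2).+1 => T e es ei T3 con nc nh np.
apply: leq_trans (leq_addl _ _); apply: rx3_le.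
have [v _] : exists v : T, true.
  have : 0 < #|T| by lia.
  by case/card_gt0P => x _; exists x.
have r0 : 0 < r by lia.
have s0 : 0 < s by lia.
have inB x : x \in B e v (l - 2).
  case: (all_B v con x) => n xn; case: (lay_of xn) => m _ lm.
  have := lay_small es ei np lm => ml.
  by apply: (subsetP (B_mono e v (m := m) _)); [lia | apply: lay_B].
have aT : alpha_le e setT A.
  move=> I _ iI; apply: (alpha_B es ei (v := v) (i := l - 2) r0 s0 nc nh _ iI).
  by apply/subsetP => x _; apply: inB.
have [D0 [_ iD0 dD0]] := maxind es ei setT.
have [D1 [D1s iD1 dD1]] := maxind es ei (~: D0).
have [D2 [D2s iD2 dD2]] := maxind es ei (~: (D0 :|: D1)).
pose D (i : nat) := if i == 0 then D0 else if i == 1 then D1 else D2.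
pose DD := D0 :|: D1 :|: D2.
pose goodP x (P : {set T}) := [&& x \in P, v \in P, #|P| <= l &
   [forall y in P, connect (restr e P) y v]].
have exP x : exists P, goodP x P.
  case: (lay_of (inB x)) => m _ lm.
  have ml := lay_small es ei np lm.
  case: (chain lm) => g [gm gl ge].
  have g0 : g 0 = v.
    by have := lay_B (gl 0 erefl); rewrite /= inE => /eqP.
  pose P := [set g (val i) | i : 'I_m.+1].
  have gP i : i <= m -> g i \in P.
    by move=> im; apply/imsetP; exists (@Ordinal m.+1 i im).
  exists P; apply/and4P; split.
  - by rewrite -gm gP.
  - by rewrite -g0 gP.
  - by apply: leq_trans (leq_imset_card _ _) _; rewrite card_ord; lia.
  apply/forallP => y; apply/implyP => /imsetP [[i hi] _ ->] /=.
  elim: i hi => [|i IH] hi; first by rewrite g0.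
  apply: connect_trans (IH (ltnW hi)); apply: connect1.
  have hi' : i < m by rewrite -ltnS.
  by rewrite /= (gP _ hi') (gP _ (ltnW hi')) es ge.
pose Pf x := odflt set0 [pick P | goodP x P].
have PfP x : goodP x (Pf x).
  rewrite /Pf; case: pickP => [P //|none].
  by case: (exP x) => P hP; have := none P; rewrite hP.
pose Dp := v |: \bigcup_(x in DD) Pf x.
have vDp : v \in Dp by rewrite in_setU1 eqxx.
have PfDp x : x \in DD -> Pf x \subset Dp.
  move=> xD; apply: subset_trans (subsetUr _ _).
  exact: (bigcup_sup x xD).
have Dsub i : i < 3 -> D i \subset Dp.
  move=> i3; apply/subsetP => x xD.
  have xDD : x \in DD.
    rewrite /DD !in_setU; move: xD; rewrite /D; case: ifP => _ xD.
      by rewrite xD.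
    by case: ifP xD => _ xD; rewrite xD ?orbT.
  by apply: (subsetP (PfDp x xDD)); case/and4P: (PfP x).
have cDD : #|DD| <= 3 * A.
  apply: leq_trans (leq_card_setU _ _).1 _.
  apply: leq_trans (leq_add (leq_card_setU _ _).1 (leqnn _)) _.
  have h0 := aT D0 (subsetT _) iD0.
  have h1 := aT D1 (subsetT _) iD1.
  have h2 := aT D2 (subsetT _) iD2.
  lia.
have cDp : #|Dp| <= M.
  have hb : #|\bigcup_(x in DD) Pf x| <= #|DD| * l.
    by apply: card_bigcup_le => x _; case/and4P: (PfP x).
  have hm : #|DD| * l <= 3 * A * l by rewrite leq_mul2r cDD orbT.
  rewrite cardsU1 /M -add1n; apply: leq_add; first by case: (_ \notin _).
  exact: leq_trans hb hm.
apply: (coloring es (v := v) (D := D) T3 cDp vDp).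
- move=> y; rewrite in_setU1 => /predU1P[->//|/bigcupP [x xDD yP]].
  case/and4P: (PfP x) => _ _ _ /forallP /(_ y) /implyP /(_ yP).
  apply: connect_sub => a b hab; apply: connect1.
  case/and3P: hab => aP bP eab; rewrite /= eab !andbT.
  by rewrite !(subsetP (PfDp x xDD)).
- move=> i j x i3 j3 xi xj.
  have n10 y : y \in D1 -> y \notin D0 by move/(subsetP D1s); rewrite inE.
  have n20 y : y \in D2 -> y \notin D0.
    by move/(subsetP D2s); rewrite !inE negb_or => /andP[].
  have n21 y : y \in D2 -> y \notin D1.
    by move/(subsetP D2s); rewrite !inE negb_or => /andP[].
  case: i i3 xi => [|[|[|]]] // _ xi; case: j j3 xj => [|[|[|]]] // _ xj //;
    rewrite /D /= in xi xj;
    by [rewrite (negbTE (n10 _ xi)) in xj | rewrite (negbTE (n10 _ xj)) in xi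
       | rewrite (negbTE (n20 _ xi)) in xj | rewrite (negbTE (n20 _ xj)) in xi
       | rewrite (negbTE (n21 _ xi)) in xj | rewrite (negbTE (n21 _ xj)) in xi].
- exact: Dsub.
move=> w wDp i i3.
have w0 : w \notin D0 by apply: contra wDp; apply: (subsetP (Dsub 0 erefl)).
have w1 : w \notin D1 by apply: contra wDp; apply: (subsetP (Dsub 1 erefl)).
have w2 : w \notin D2 by apply: contra wDp; apply: (subsetP (Dsub 2 erefl)).
rewrite /D; case: i i3 => [|[|[|]]] // _ /=.
- by apply: dD0.
- by apply: dD1 => //; rewrite inE.
- by apply: dD2 => //; rewrite !inE negb_or w0 w1.
Qed.
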